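(* Let $c\ge 1$. There exists a constant $A=A(c)\in(0,\infty)$ (depending only on $c$, in particular independent of $N$) such that the following holds for every $N$. Let $V_N=\{0,\ldots,N\}$ and let $\mathcal Q_N$ be the set of all birth and death Markov kernels $Q$ on $V_N$ with $Q(x,y)\in[1/4,3/4]$ whenever $|x-y|\le 1$, and whose reversible probability measure $\pi$ satisfies $1/4\le (N+1)\pi(x)\le 4$ for all $x\in V_N$. Let $(K_i)_{i\ge1}$ be a sequence with $K_i\in\mathcal Q_N$ for all $i$, and assume that $(K_i)_{i\ge1}$ is $c$-stable with respect to the uniform probability measure on $V_N$. Then for every $\varepsilon\in(0,1)$ the relative-sup merging time of $(K_i)_{i\ge1}$ satisfies \[T_\infty(\varepsilon)\le A N^2\bigl(1+\log_+ (1/\varepsilon)\bigr).\]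
   Context: A Markov kernel $K$ on a finite set $V$ satisfies $K(x,y)\ge0$ and $\sum_y K(x,y)=1$. For a sequence $(K_i)_{i\ge1}$ of Markov kernels, $K_{n,m}=K_{n+1}K_{n+2}\cdots K_m$ (matrix product) for $m\ge n$, with $K_{n,n}=I$. A birth and death kernel on $\{0,\ldots,N\}$ is one with $Q(x,y)=0$ whenever $|x-y|>1$. The sequence $(K_i)$ is $c$-stable with respect to a probability measure $\mu_0$ if, setting $\mu_n=\mu_0K_{0,n}$, one has $c^{-1}\le \mu_n(x)/\mu_0(x)\le c$ for all $n\ge0$ and $x\in V$. The relative-sup merging time is $T_\infty(\varepsilon)=\inf\{n: \max_{x,y,z\in V}|K_{0,n}(x,z)/K_{0,n}(y,z)-1|<\varepsilon\}$, with the conventions $0/0=1$ and $a/0=\infty$ for $a>0$. $\log_+ t=\max(\log t,0)$. *)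

(* Defs.v *)
From HB Require Import structures.
From mathcomp Require Import all_boot all_order all_algebra.
From mathcomp Require Import reals exp.
Set Implicit Arguments. Unset Strict Implicit. Unset Printing Implicit Defensive.
Import Order.TTheory GRing.Theory Num.Theory.
Local Open Scope ring_scope.

Section Defs.
Variable R : realType.

Definition markov_kernel n (K : 'M[R]_n) : Prop :=
  (forall x y, 0 <= K x y) /\ (forall x, \sum_y K x y = 1).

Definition birth_death N (Q : 'M[R]_N.+1) : Prop :=
  forall x y : 'I_N.+1, (x.+1 < y)%N || (y.+1 < x)%N -> Q x y = 0.

Definition prob_measure n (p : 'rV[R]_n) : Prop :=
  (forall x, 0 <= p 0 x) /\ \sum_x p 0 x = 1.

Definition reversible n (Q : 'M[R]_n) (p : 'rV[R]_n) : Prop :=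
  prob_measure p /\ forall x y, p 0 x * Q x y = p 0 y * Q y x.

Definition QN N (Q : 'M[R]_N.+1) : Prop :=
  [/\ markov_kernel Q, birth_death Q,
      (forall x y : 'I_N.+1, (x <= y.+1)%N && (y <= x.+1)%N ->
          1/4 <= Q x y <= 3/4)
    & exists p : 'rV[R]_N.+1, reversible Q p /\
        forall x, 1/4 <= N.+1%:R * p 0 x <= 4].

(* K_{0,n} = K_1 K_2 ... K_n, with K_{0,0} = I *)
Fixpoint Kprod n (K : nat -> 'M[R]_n) (m : nat) : 'M[R]_n :=
  match m with
  | O => 1%:M
  | S m' => Kprod K m' *m K m
  end.

Definition unif N : 'rV[R]_N.+1 := const_mx (N.+1%:R)^-1.

Definition c_stable n (c : R) (K : nat -> 'M[R]_n) (mu0 : 'rV[R]_n) : Prop :=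
  forall (m : nat) x, c^-1 <= (mu0 *m Kprod K m) 0 x / mu0 0 x <= c.

(* |a/b - 1| < eps with conventions 0/0 = 1 and a/0 = +oo for a > 0
   (entries are nonnegative, so b = 0 and a <> 0 gives ratio +oo). *)
Definition ratio_close (a b eps : R) : Prop :=
  if b == 0 then a = 0 else `|a / b - 1| < eps.

(* the set whose infimum is T_infty(eps): max_{x,y,z} |K_{0,n}(x,z)/K_{0,n}(y,z)-1| < eps *)
Definition merged n (K : nat -> 'M[R]_n) (eps : R) (m : nat) : Prop :=
  forall x y z, ratio_close (Kprod K m x z) (Kprod K m y z) eps.

Definition logp (t : R) : R := Num.max (ln t) 0.

End Defs.

(* Main.v *)
Require Import Defs.
From HB Require Import structures.
From mathcomp Require Import all_boot all_order all_algebra.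
From mathcomp Require Import reals exp sequences.
From mathcomp Require Import ring lra zify.
Set Implicit Arguments. Unset Strict Implicit. Unset Printing Implicit Defensive.
Import Order.TTheory GRing.Theory Num.Theory.
Local Open Scope ring_scope.

Lemma wvar_id (R : realType) (I : finType) (w f : I -> R) :
  \sum_i w i = 1 ->
  \sum_i w i * (f i - \sum_j w j * f j) ^+ 2 =
  \sum_i w i * f i ^+ 2 - (\sum_j w j * f j) ^+ 2.
Proof.
move=> Hw; set m := \sum_j w j * f j.
rewrite (eq_bigr (fun i => w i * f i ^+ 2 - (m *+ 2 * (w i * f i) - m ^+ 2 * w i))); last first.
  by move=> i _; ring.
rewrite sumrB sumrB -!mulr_sumr Hw -/m; ring.
Qed.

Lemma jensen_bound (R : realType) (I : finType) (w d : I -> R) (B : R) :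
  (forall i, 0 <= w i) -> \sum_i w i = 1 -> (forall i, d i ^+ 2 <= B) ->
  (\sum_i w i * d i) ^+ 2 <= B.
Proof.
move=> w0 Hw dB.
have H := wvar_id d Hw.
have H0 : 0 <= \sum_i w i * (d i - \sum_j w j * d j) ^+ 2.
  by apply: sumr_ge0 => i _; rewrite mulr_ge0 // sqr_ge0.
have H1 : \sum_i w i * d i ^+ 2 <= \sum_i w i * B.
  by apply: ler_sum => i _; rewrite ler_wpM2l.
rewrite -mulr_suml Hw mul1r in H1.
lra.
Qed.

Lemma cs_nat (R : realType) (d : nat -> R) (a k : nat) :
  (\sum_(a <= i < a + k) d i) ^+ 2 <= k%:R * \sum_(a <= i < a + k) d i ^+ 2.
Proof.
elim: k => [|k IH]; first by rewrite addn0 big_geq // expr0n /= mul0r.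
rewrite addnS big_nat_recr ?leq_addr // big_nat_recr ?leq_addr //=.
set S := \sum_(a <= i < a + k) d i; set Q := \sum_(a <= i < a + k) d i ^+ 2.
rewrite -/S -/Q in IH.
have Q0 : 0 <= Q by apply: sumr_ge0 => i _; exact: sqr_ge0.
have k0 : 0 <= (k%:R : R) by [].
rewrite -natr1.
have [k00|kp] := eqVneq k 0%N.
  move: IH; rewrite k00 mul0r => IH.
  have S0 : S = 0 by apply/eqP; rewrite -sqrf_eq0 eq_le IH sqr_ge0.
  have kr : (k%:R : R) = 0 by rewrite k00.
  rewrite S0; rewrite ?kr; nra.
have kpos : 0 < (k%:R : R) by rewrite ltr0n lt0n.
have hs := sqr_ge0 (S - k%:R * d (a + k)%N).
have h : 0 <= k%:R * (Q + k%:R * d (a + k)%N ^+ 2 - 2 * S * d (a+k)%N) by nra.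
have h2 : 0 <= Q + k%:R * d (a + k)%N ^+ 2 - 2 * S * d (a+k)%N.
  by rewrite -(pmulr_rge0 _ kpos).
nra.
Qed.

Definition Dif (R : realType) (N : nat) (f : 'I_N.+1 -> R) : R :=
  \sum_(i < N) (f (inord i.+1) - f (inord i)) ^+ 2.

Lemma Dif_ge0 (R : realType) N (f : 'I_N.+1 -> R) : 0 <= Dif f.
Proof. by apply: sumr_ge0 => i _; exact: sqr_ge0. Qed.

Lemma osc_bound (R : realType) N (f : 'I_N.+1 -> R) x y :
  (f x - f y) ^+ 2 <= N%:R * Dif f.
Proof.
wlog xy : x y / (x <= y)%N.
  move=> Hw; case: (leqP x y) => h; first exact: Hw.
  by rewrite -sqrrN opprB; apply: Hw; apply: ltnW.
set F := fun k : nat => f (inord k).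
have fx : f x = F x by rewrite /F inord_val.
have fy : f y = F y by rewrite /F inord_val.
have tel : F y - F x = \sum_(x <= k < y) (F k.+1 - F k).
  by rewrite telescope_sumr.
have yN : (y <= N)%N by rewrite -ltnS.
rewrite -sqrrN opprB fx fy tel -(subnKC xy).
apply: le_trans (cs_nat _ _ _) _.
rewrite (subnKC xy).
apply: ler_pM.
- by [].
- by apply: sumr_ge0 => i _; exact: sqr_ge0.
- by rewrite ler_nat (leq_trans (leq_subr _ _) yN).
rewrite /Dif -(big_mkord xpredT (fun i => (F i.+1 - F i) ^+ 2)).
rewrite (big_cat_nat (leq0n x) (leq_trans xy yN)) /=.
rewrite (big_cat_nat xy yN) /=.
have h1 : 0 <= \sum_(0 <= i < x) (F i.+1 - F i) ^+ 2 by apply: sumr_ge0 => i _; exact: sqr_ge0.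
have h2 : 0 <= \sum_(y <= i < N) (F i.+1 - F i) ^+ 2 by apply: sumr_ge0 => i _; exact: sqr_ge0.
lra.
Qed.

Lemma two_terms (R : realType) (I : finType) (F : I -> R) (x x' : I) :
  x' != x -> (forall i, 0 <= F i) -> F x + F x' <= \sum_i F i.
Proof.
move=> nx F0; rewrite (bigD1 x) //= (bigD1 x') //=.
have : 0 <= \sum_(i | (i != x) && (i != x')) F i by apply: sumr_ge0.
lra.
Qed.

Lemma widen_inord N (i : 'I_N) : widen_ord (leqnSn N) i = inord i.
Proof. by apply: val_inj; rewrite /= inordK // ltnS ltnW. Qed.

Lemma sum_drop_last (R : realType) N (h : 'I_N.+1 -> R) :
  (forall x, 0 <= h x) -> \sum_(i < N) h (inord i) <= \sum_x h x.
Proof.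
move=> h0; rewrite big_ord_recr /=.
have -> : \sum_(i < N) h (widen_ord (leqnSn N) i) = \sum_(i < N) h (inord i).
  by apply: eq_bigr => i _; congr h; apply: val_inj; rewrite /= inordK // ltnS ltnW.
have := h0 ord_max; lra.
Qed.

Lemma drop_step (R : realType) N (L : 'M[R]_N.+1) (al be f : 'I_N.+1 -> R) (a : R) :
  (forall x y, 0 <= L x y) -> (forall x, \sum_y L x y = 1) ->
  (forall x, 0 <= al x) ->
  (forall y, be y = \sum_x al x * L x y) ->
  (forall i : 'I_N, a <= al (inord i) * L (inord i) (inord i) * L (inord i) (inord i.+1)) ->
  \sum_x al x * (\sum_y L x y * f y) ^+ 2 <= \sum_y be y * f y ^+ 2 - a * Dif f.
Proof.
move=> L0 L1 al0 Hbe Ha.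
have E : \sum_y be y * f y ^+ 2 = \sum_x al x * \sum_y L x y * f y ^+ 2.
  under eq_bigr do rewrite Hbe mulr_suml.
  rewrite exchange_big /=; apply: eq_bigr => x _; rewrite mulr_sumr.
  by apply: eq_bigr => y _; rewrite mulrA.
rewrite E.
set T := fun x => \sum_y L x y * f y ^+ 2 - (\sum_y L x y * f y) ^+ 2.
have TE x : T x = \sum_y L x y * (f y - \sum_j L x j * f j) ^+ 2 by rewrite /T wvar_id.
have T0 x : 0 <= T x by rewrite TE; apply: sumr_ge0 => y _; rewrite mulr_ge0 // sqr_ge0.
suff : a * Dif f <= \sum_x al x * T x.
  rewrite /T; under [X in _ <= X -> _]eq_bigr do rewrite mulrBr.
  rewrite sumrB; lra.
have HH := sum_drop_last (h := fun x => al x * T x) (fun x => mulr_ge0 (al0 x) (T0 x)).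
apply: (le_trans _ HH).
rewrite /Dif mulr_sumr; apply: ler_sum => i _.
set x := (inord i : 'I_N.+1); set x' := (inord i.+1 : 'I_N.+1).
have nx : x' != x.
  apply/negP => /eqP/(congr1 val) /=.
  have h1 : (i.+1 < N.+1)%N by rewrite ltnS.
  have h2 : (i < N.+1)%N by rewrite ltnS ltnW.
  rewrite (inordK h1) (inordK h2); lia.
set g := \sum_j L x j * f j.
have hT : L x x * (f x - g) ^+ 2 + L x x' * (f x' - g) ^+ 2 <= T x.
  rewrite TE; apply: (two_terms (F := fun y => L x y * (f y - g) ^+ 2) nx).
  by move=> y; rewrite mulr_ge0 // sqr_ge0.
have hL : L x x + L x x' <= 1 by rewrite -(L1 x); apply: two_terms.
have ab : L x x * L x x' * (f x' - f x) ^+ 2 <= T x.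
  apply: le_trans hT.
  have La := L0 x x; have Lb := L0 x x'.
  set A := L x x in La hL *; set B := L x x' in Lb hL *.
  set u := f x - g; set v := f x' - g.
  have -> : f x' - f x = v - u by rewrite /u /v; ring.
  have hs := sqr_ge0 (A * u + B * v).
  have h1 : 0 <= A * (1 - A - B) * u ^+ 2 by apply: mulr_ge0; [apply: mulr_ge0 => //; lra | exact: sqr_ge0].
  have h2 : 0 <= B * (1 - A - B) * v ^+ 2 by apply: mulr_ge0; [apply: mulr_ge0 => //; lra | exact: sqr_ge0].
  nra.
have := Ha i; rewrite -/x -/x' => hai.
have d0 := sqr_ge0 (f x' - f x).
have al0x := al0 x.
nra.
Qed.

Lemma dev_bound (R : realType) N (w f : 'I_N.+1 -> R) i :
  (forall j, 0 <= w j) -> \sum_j w j = 1 ->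
  (f i - \sum_j w j * f j) ^+ 2 <= N%:R * Dif f.
Proof.
move=> w0 w1.
have -> : f i - \sum_j w j * f j = \sum_j w j * (f i - f j).
  under [RHS]eq_bigr do rewrite mulrBr.
  by rewrite sumrB -mulr_suml w1 mul1r.
apply: jensen_bound => // j; exact: osc_bound.
Qed.

Lemma poinc (R : realType) N (w f : 'I_N.+1 -> R) :
  (forall j, 0 <= w j) -> \sum_j w j = 1 ->
  \sum_j w j * f j ^+ 2 - (\sum_j w j * f j) ^+ 2 <= N%:R * Dif f.
Proof.
move=> w0 w1; rewrite -wvar_id //.
apply: le_trans (_ : \sum_j w j * (N%:R * Dif f) <= _).
  by apply: ler_sum => j _; rewrite ler_wpM2l // dev_bound.
by rewrite -mulr_suml w1 mul1r.
Qed.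

Lemma var_ge0 (R : realType) N (w f : 'I_N.+1 -> R) :
  (forall j, 0 <= w j) -> \sum_j w j = 1 ->
  0 <= \sum_j w j * f j ^+ 2 - (\sum_j w j * f j) ^+ 2.
Proof.
move=> w0 w1; rewrite -wvar_id //.
by apply: sumr_ge0 => j _; rewrite mulr_ge0 // sqr_ge0.
Qed.

Lemma nash (R : realType) N (w f : 'I_N.+1 -> R) :
  (forall j, 0 <= w j) -> \sum_j w j = 1 -> (forall j, 0 <= f j) ->
  (\sum_j w j * f j ^+ 2 - (\sum_j w j * f j) ^+ 2) ^+ 2
    <= (\sum_j w j * f j) ^+ 2 * (N%:R * Dif f).
Proof.
move=> w0 w1 f0.
set m := \sum_j w j * f j.
set t := Num.sqrt (N%:R * Dif f).
have t0 : 0 <= t by apply: sqrtr_ge0.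
have tt : t ^+ 2 = N%:R * Dif f by rewrite sqr_sqrtr // mulr_ge0 // Dif_ge0.
have hv : \sum_j w j * f j ^+ 2 - m ^+ 2 = \sum_j w j * f j * (f j - m).
  under [RHS]eq_bigr do rewrite mulrBr.
  rewrite sumrB; congr (_ - _); first by apply: eq_bigr => j _; rewrite -mulrA.
  by rewrite -mulr_suml -/m expr2.
have hle : \sum_j w j * f j * (f j - m) <= \sum_j w j * f j * t.
  apply: ler_sum => j _; apply: ler_wpM2l; first by rewrite mulr_ge0.
  have := dev_bound f j w0 w1; rewrite -/m -tt => h.
  nra.
have m0 : 0 <= m by apply: sumr_ge0 => j _; rewrite mulr_ge0.
have v0 := var_ge0 f w0 w1; rewrite -/m in v0.
rewrite -mulr_suml -/m in hle.
rewrite -tt; nra.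
Qed.

Lemma phase1 (R : realType) (v Dd : nat -> R) (n : nat) (Mr p Nr : R) :
  0 < Mr -> 0 < p -> 0 < Nr ->
  (forall j, (j < n)%N -> v j.+1 <= v j - Nr / Mr * Dd j) ->
  (forall j, (j <= n)%N -> 0 <= v j) ->
  (forall j, (j <= n)%N -> v j ^+ 2 <= p ^+ 2 * (Nr * Dd j)) ->
  forall j, (j <= n)%N -> j%:R * v j <= Mr * p ^+ 2.
Proof.
move=> M0 p0 N0 Hs H0 HN; elim=> [|j IH] jn.
  by rewrite mul0r; apply: mulr_ge0; [exact: ltW | exact: sqr_ge0].
have jn' : (j <= n)%N by apply: ltnW.
have IHj := IH jn'.
set P := Mr * p ^+ 2.
have P0 : 0 < P by rewrite mulr_gt0 // exprn_gt0.
rewrite -/P in IHj *.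
have hs := Hs j jn; have hn := HN j jn'; have v0 := H0 j jn'.
have key : P * v j.+1 <= P * v j - v j ^+ 2.
  have e : P * (Nr / Mr * Dd j) = p ^+ 2 * (Nr * Dd j).
    by rewrite /P; field; rewrite gt_eqF.
  have := ler_wpM2l (ltW P0) hs; rewrite mulrBr e; lra.
have jr : 0 <= (j%:R : R) by [].
have cl : (j.+1%:R) * (P * v j - v j ^+ 2) <= P ^+ 2.
  rewrite -natr1.
  case: (lerP ((j%:R + 1) * v j) P) => h.
    have := sqr_ge0 (v j); nra.
  case: (lerP (v j) P) => h2.
    have h3 : 0 <= (P + v j - (j%:R + 1) * v j) * (P - v j) by apply: mulr_ge0; nra.
    have := sqr_ge0 (v j); nra.
  have h3 : 0 <= ((j%:R + 1) * v j) * (v j - P) by apply: mulr_ge0; nra.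
  have := sqr_ge0 P; nra.
have : P * (j.+1%:R * v j.+1) <= P * P.
  have jr1 : 0 <= (j.+1%:R : R) by [].
  have := ler_wpM2l jr1 key.
  rewrite -expr2; nra.
by rewrite ler_pM2l.
Qed.

Lemma phase2 (R : realType) (v Dd : nat -> R) (n M : nat) (p Nr : R) :
  (0 < M)%N -> 0 < p -> 0 < Nr ->
  (forall j, (j < n)%N -> v j.+1 <= v j - Nr / M%:R * Dd j) ->
  (forall j, (j <= n)%N -> 0 <= v j) ->
  (forall j, (j <= n)%N -> v j <= Nr * Dd j) ->
  (forall j, (j <= n)%N -> v j ^+ 2 <= p ^+ 2 * (Nr * Dd j)) ->
  forall i, (M + i <= n)%N -> v (M + i)%N <= p ^+ 2 * (1 - M%:R^-1) ^+ i.
Proof.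
move=> Mp p0 N0 Hs H0 HP HN.
have M0 : 0 < (M%:R : R) by rewrite ltr0n.
elim=> [|i IH] Mi.
  move: Mi; rewrite addn0 expr0 mulr1 => Mi.
  have := phase1 M0 p0 N0 Hs H0 HN Mi.
  by rewrite ler_pM2l.
have Mi' : (M + i <= n)%N by apply: leq_trans Mi; rewrite addnS.
have := IH Mi'.
have Mi2 : (M + i < n)%N by rewrite -addnS.
have hs := Hs (M + i)%N Mi2; rewrite -addnS in hs.
have hp := HP _ Mi'.
have e : Nr / M%:R * Dd (M + i)%N = (Nr * Dd (M + i)%N) / M%:R by rewrite mulrAC.
rewrite e in hs.
have q0 : 0 <= 1 - (M%:R : R)^-1.
  rewrite subr_ge0 invf_le1 //; by rewrite ler1n.
have : v (M + i.+1)%N <= v (M + i)%N * (1 - M%:R^-1).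
  apply: le_trans hs _.
  rewrite mulrBr mulr1 lerD2l lerN2.
  by rewrite ler_pM2r ?invr_gt0.
move=> h1 h2; apply: le_trans h1 _.
by apply: le_trans (ler_wpM2r q0 h2) _; rewrite [_ ^+ i.+1]exprSr mulrA.
Qed.

Lemma phase3 (R : realType) (v Dd : nat -> R) (n M J : nat) (Nr V : R) :
  (0 < M)%N -> 0 < Nr ->
  (forall j, (j < n)%N -> v j.+1 <= v j - Nr / M%:R * Dd j) ->
  (forall j, (j <= n)%N -> 0 <= v j) ->
  (J + M <= n)%N -> v J <= V ->
  exists j, [/\ (J <= j)%N, (j <= n)%N & Nr * Dd j <= V].
Proof.
move=> Mp N0 Hs H0 JM vJ.
case: (boolP [exists i : 'I_M, Nr * Dd (J + i)%N <= V]).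
  move/existsP => [i hi]; exists (J + i)%N; split => //; first exact: leq_addr.
  by apply: leq_trans JM; rewrite leq_add2l ltnW.
move/existsPn => hn; exfalso.
have M0 : 0 < (M%:R : R) by rewrite ltr0n.
have st : forall i, (i < M)%N -> v (J + i).+1 < v (J + i)%N - V / M%:R.
  move=> i iM.
  have hi := hn (Ordinal iM); rewrite /= -ltNge in hi.
  have Jn : (J + i < n)%N by apply: leq_trans JM; rewrite ltn_add2l.
  apply: le_lt_trans (Hs _ Jn) _.
  rewrite ltrD2l ltrN2 mulrAC ltr_pM2r ?invr_gt0 //.
have cl : forall i, (i <= M)%N -> v (J + i)%N <= V - i%:R * (V / M%:R).
  elim=> [|i IH] iM; first by rewrite addn0 mul0r subr0.
  have := st i iM; have := IH (ltnW iM); rewrite addnS -natr1; lra.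
set m := M.-1.
have eM : M = m.+1 by rewrite /m prednK.
have h1 := cl m (leq_pred M).
have mM : (m < M)%N by rewrite eM.
have h2 := st m mM.
have h3 : 0 <= v (J + m).+1 by rewrite -addnS -eM; exact: H0.
have e : V - m%:R * (V / M%:R) - V / M%:R = 0.
  have eMr : (M%:R : R) = m%:R + 1 by rewrite eM natr1.
  rewrite eMr; field; rewrite -eMr gt_eqF //.
lra.
Qed.

Definition mu (R : realType) N (K : nat -> 'M[R]_N.+1) (s : nat) (x : 'I_N.+1) : R :=
  \sum_a (N.+1%:R)^-1 * Kprod K s a x.

Fixpoint G (R : realType) N (K : nat -> 'M[R]_N.+1) (n : nat) (z : 'I_N.+1) (j : nat)
  : 'I_N.+1 -> R :=
  match j with
  | O => fun x => (x == z)%:R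
  | j'.+1 => fun x => \sum_y K (n - j')%N x y * G K n z j' y
  end.

Lemma Kprod_markov (R : realType) N (K : nat -> 'M[R]_N.+1) :
  (forall i, (0 < i)%N -> markov_kernel (K i)) ->
  forall s, (forall x y, 0 <= Kprod K s x y) /\ (forall x, \sum_y Kprod K s x y = 1).
Proof.
move=> HK; elim=> [|s [IH0 IH1]] /=.
  split=> [x y|x]; rewrite ?mxE.
    by case: (x == y).
  rewrite (bigD1 x) //= !mxE eqxx big1 ?addr0 // => y /negbTE.
  by rewrite mxE eq_sym => ->.
have [K0 K1] := HK s.+1 (ltn0Sn s).
split=> [x y|x].
  by rewrite mxE; apply: sumr_ge0 => w _; rewrite mulr_ge0.
under eq_bigr do rewrite mxE.
rewrite exchange_big /=.
under eq_bigr do rewrite -mulr_sumr K1 mulr1.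
exact: IH1.
Qed.

Lemma sum_delta_r (R : realType) N (P : 'I_N.+1 -> R) (z : 'I_N.+1) :
  \sum_y P y * (y == z)%:R = P z.
Proof.
rewrite (bigD1 z) //= eqxx mulr1 big1 ?addr0 // => y /negbTE ->.
by rewrite mulr0.
Qed.

Lemma combo (R : realType) N (K : nat -> 'M[R]_N.+1) (n : nat) (z : 'I_N.+1) :
  forall j s, (s + j)%N = n ->
  forall x, \sum_y Kprod K s x y * G K n z j y = Kprod K n x z.
Proof.
elim=> [|j IH] s sj x.
  by rewrite addn0 in sj; rewrite /= sum_delta_r sj.
have e : (n - j)%N = s.+1 by rewrite -sj; lia.
rewrite /= e.
under eq_bigr do rewrite mulr_sumr.
rewrite exchange_big /=.
rewrite -(IH s.+1); last by rewrite -sj addSnnS.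
apply: eq_bigr => w _.
rewrite mxE mulr_suml; apply: eq_bigr => y _.
by rewrite mulrA.
Qed.

Lemma mu_step (R : realType) N (K : nat -> 'M[R]_N.+1) s y :
  mu K s.+1 y = \sum_x mu K s x * K s.+1 x y.
Proof.
rewrite /mu /=.
under eq_bigr do rewrite mxE mulr_sumr.
rewrite exchange_big /=; apply: eq_bigr => x _.
rewrite mulr_suml; apply: eq_bigr => a _.
by rewrite mulrA.
Qed.

Lemma mu_sum (R : realType) N (K : nat -> 'M[R]_N.+1) s :
  (forall i, (0 < i)%N -> markov_kernel (K i)) ->
  (forall x, 0 <= mu K s x) /\ \sum_x mu K s x = 1.
Proof.
move=> HK; have [P0 P1] := Kprod_markov HK s.
split=> [x|].
  by apply: sumr_ge0 => a _; rewrite mulr_ge0 // invr_ge0.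
rewrite /mu exchange_big /=.
under eq_bigr do rewrite -mulr_sumr P1 mulr1.
rewrite sumr_const card_ord -(mulr_natr (N.+1%:R^-1)) mulVf //.
by rewrite pnatr_eq0.
Qed.

Lemma mu_bounds (R : realType) N (K : nat -> 'M[R]_N.+1) (c : R) :
  c_stable c K (unif R N) ->
  forall s x, c^-1 <= N.+1%:R * mu K s x <= c.
Proof.
move=> Hc s x; have := Hc s x.
have -> : (unif R N *m Kprod K s) 0 x / unif R N 0 x = N.+1%:R * mu K s x.
  rewrite /unif !mxE /mu; under eq_bigr do rewrite mxE.
  rewrite invrK mulrC //.
done.
Qed.

Lemma mean_G (R : realType) N (K : nat -> 'M[R]_N.+1) (n : nat) (z : 'I_N.+1) j s :
  (s + j)%N = n -> \sum_x mu K s x * G K n z j x = mu K n z.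
Proof.
move=> sj; rewrite /mu.
under eq_bigr do rewrite mulr_suml.
rewrite exchange_big /=; apply: eq_bigr => a _.
rewrite -(combo K z sj) mulr_sumr; apply: eq_bigr => y _.
by rewrite mulrA.
Qed.

Lemma G_ge0 (R : realType) N (K : nat -> 'M[R]_N.+1) (n : nat) (z : 'I_N.+1) :
  (forall i, (0 < i)%N -> markov_kernel (K i)) ->
  (forall j, (j <= n)%N -> forall x, 0 <= G K n z j x).
Proof.
move=> HK; elim=> [|j IH] jn x /=; first by case: (x == z).
have hh : (0 < n - j)%N by lia.
have [K0 _] := HK (n - j)%N hh.
apply: sumr_ge0 => y _; rewrite mulr_ge0 //; apply: IH; lia.
Qed.

Lemma core (R : realType) N (K : nat -> 'M[R]_N.+1) (c : R) (Cn k : nat) (z x : 'I_N.+1) :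
  (0 < N)%N -> 1 <= c -> c <= Cn%:R ->
  (forall i, (0 < i)%N -> QN (K i)) -> c_stable c K (unif R N) ->
  (Kprod K (k.+2 * (16 * Cn * N * N.+1)) x z - mu K (k.+2 * (16 * Cn * N * N.+1)) z) ^+ 2
   <= mu K (k.+2 * (16 * Cn * N * N.+1)) z ^+ 2
      * (1 - (16 * Cn * N * N.+1)%:R^-1) ^+ (k * (16 * Cn * N * N.+1)).
Proof.
move=> Np c1 cC HQ Hc.
set M := (16 * Cn * N * N.+1)%N.
set n := (k.+2 * M)%N.
set p := mu K n z.
have HK : forall i, (0 < i)%N -> markov_kernel (K i) by move=> i /HQ [].
have Cn1 : (1 <= Cn)%N by rewrite -(ler_nat R); apply: le_trans cC.
have Mp : (0 < M)%N by rewrite /M; lia.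
have c0 : 0 < c by apply: lt_le_trans c1.
have pb := mu_bounds Hc n z; rewrite -/p in pb.
have p0 : 0 < p.
  have [hb _] := andP pb.
  have : 0 < N.+1%:R * p by apply: (lt_le_trans _ hb); rewrite invr_gt0.
  by rewrite pmulr_rgt0.
have N0 : 0 < (N%:R : R) by rewrite ltr0n.
pose v j := \sum_x mu K (n - j) x * G K n z j x ^+ 2 - p ^+ 2.
pose Dd j := Dif (G K n z j).
have mean : forall j, (j <= n)%N -> \sum_x mu K (n - j) x * G K n z j x = p.
  by move=> j jn; apply: mean_G; rewrite subnK.
have H0 : forall j, (j <= n)%N -> 0 <= v j.
  move=> j jn; have [w0 w1] := mu_sum (n - j) HK.
  by have := var_ge0 (G K n z j) w0 w1; rewrite mean.
have HP : forall j, (j <= n)%N -> v j <= N%:R * Dd j.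
  move=> j jn; have [w0 w1] := mu_sum (n - j) HK.
  by have := poinc (G K n z j) w0 w1; rewrite mean.
have HN : forall j, (j <= n)%N -> v j ^+ 2 <= p ^+ 2 * (N%:R * Dd j).
  move=> j jn; have [w0 w1] := mu_sum (n - j) HK.
  by have := nash w0 w1 (G_ge0 z HK jn); rewrite mean.
have Hs : forall j, (j < n)%N -> v j.+1 <= v j - N%:R / M%:R * Dd j.
  move=> j jn.
  set s := (n - j.+1)%N.
  have e : (n - j)%N = s.+1 by rewrite /s; lia.
  have [[K0 K1] _ Kb _] := HQ s.+1 (ltn0Sn s).
  have [al0 _] := mu_sum s HK.
  have Ha : forall i : 'I_N, N%:R / M%:R <=
      mu K s (inord i) * K s.+1 (inord i) (inord i) * K s.+1 (inord i) (inord i.+1).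
    move=> i.
    have hi1 : (i < N.+1)%N by rewrite ltnS ltnW.
    have hi2 : (i.+1 < N.+1)%N by rewrite ltnS.
    have k1 : 1/4 <= K s.+1 (inord i) (inord i).
      have b1 : ((inord i : 'I_N.+1) <= (inord i : 'I_N.+1).+1)%N &&
                ((inord i : 'I_N.+1) <= (inord i : 'I_N.+1).+1)%N.
        by rewrite !inordK //; lia.
      by case/andP: (Kb _ _ b1).
    have k2 : 1/4 <= K s.+1 (inord i) (inord i.+1).
      have b1 : ((inord i : 'I_N.+1) <= (inord i.+1 : 'I_N.+1).+1)%N &&
                ((inord i.+1 : 'I_N.+1) <= (inord i : 'I_N.+1).+1)%N.
        by rewrite !inordK //; lia.
      by case/andP: (Kb _ _ b1).
    set q := (Cn%:R * N.+1%:R : R)^-1.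
    have q0 : 0 <= q by rewrite invr_ge0 mulr_ge0.
    have ha : N%:R / M%:R = q / 16 :> R.
      rewrite /q /M !natrM; field.
      have Cp : 0 < (Cn%:R : R) by rewrite ltr0n.
      by apply/and3P; split; rewrite gt_eqF //; lra.
    have hm : q <= mu K s (inord i).
      have := mu_bounds Hc s (inord i) => /andP [hb _].
      have Cp : 0 < (Cn%:R : R) by rewrite ltr0n.
      have hcC : (Cn%:R : R)^-1 <= c^-1 by rewrite lef_pV2 ?posrE.
      have hN : 0 < (N.+1%:R : R) by rewrite ltr0n.
      rewrite /q invfM ler_pdivrMr //.
      by rewrite mulrC; apply: le_trans hb.
    have m0 := al0 (inord i).
    rewrite ha.
    set m1 := mu K s (inord i) in hm m0 *.
    set a1 := K s.+1 (inord i) (inord i) in k1 *.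
    set a2 := K s.+1 (inord i) (inord i.+1) in k2 *.
    have h1 : q / 4 <= m1 * a1.
      have a10 : 0 <= a1 by lra.
      have hh : 0 <= (m1 - q) * a1 by apply: mulr_ge0 => //; lra.
      have hh2 : 0 <= q * (a1 - 1/4) by apply: mulr_ge0 => //; lra.
      nra.
    have h2 : 0 <= q / 4 by lra.
    have a20 : 0 <= a2 by lra.
    have hh : 0 <= (m1 * a1 - q / 4) * a2 by apply: mulr_ge0 => //; lra.
    have hh2 : 0 <= q / 4 * (a2 - 1/4) by apply: mulr_ge0 => //; lra.
    nra.
  have := drop_step (G K n z j) K0 K1 al0 (mu_step K s) Ha.
  by rewrite /v /Dd /= e -/s; lra.
have Mr0 : 0 < (M%:R : R) by rewrite ltr0n.
have Vb : v (M + k * M)%N <= p ^+ 2 * (1 - M%:R^-1) ^+ (k * M).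
  apply: (phase2 Mp p0 N0 Hs H0 HP HN).
  by rewrite /n !mulSn; lia.
have JM : (M + k * M + M <= n)%N by rewrite /n !mulSn; lia.
have [j [Jj jn hj]] := phase3 Mp N0 Hs H0 JM Vb.
set V := p ^+ 2 * (1 - M%:R^-1) ^+ (k * M).
rewrite -/V in hj.
set s := (n - j)%N.
have [w0 w1] := mu_sum s HK.
have dev : forall y, (G K n z j y - p) ^+ 2 <= V.
  move=> y; apply: le_trans hj.
  by have := dev_bound (G K n z j) y w0 w1; rewrite mean.
have [P0 P1] := Kprod_markov HK s.
have -> : Kprod K n x z - p = \sum_y Kprod K s x y * (G K n z j y - p).
  rewrite -(combo K z (j := j) (s := s)); last by rewrite /s subnK.
  under [RHS]eq_bigr do rewrite mulrBr.
  by rewrite sumrB -mulr_suml P1 mul1r.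
exact: jensen_bound.
Qed.

Lemma pow_mono (R : realType) (a b : R) n : 0 <= a -> a <= b -> a ^+ n <= b ^+ n.
Proof.
move=> a0 ab; elim: n => [|n IH]; first by rewrite !expr0.
rewrite !exprS; apply: ler_pM => //; exact: exprn_ge0.
Qed.

Lemma qpow (R : realType) (M k : nat) : (0 < M)%N ->
  (1 - (M%:R : R)^-1) ^+ (k * M) <= expR (- k%:R).
Proof.
move=> Mp.
have M0 : 0 < (M%:R : R) by rewrite ltr0n.
have q0 : 0 <= 1 - (M%:R : R)^-1 by rewrite subr_ge0 invf_le1 // ler1n.
have hq : 1 - (M%:R : R)^-1 <= expR (- (M%:R^-1)) by apply: expR_ge1Dx.
apply: le_trans (pow_mono (k * M) q0 hq) _.
rewrite -expRM_natl natrM.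
have -> : k%:R * M%:R * - (M%:R : R)^-1 = - k%:R by field; rewrite gt_eqF.
done.
Qed.

Lemma exp_small (R : realType) (eps : R) (k : nat) : 0 < eps ->
  2 * ln (1 / eps) + 4 <= k%:R -> expR (- k%:R) <= eps ^+ 2 / 16.
Proof.
move=> e0 hk.
have hl : ln (1 / eps) = - ln eps by rewrite div1r lnV // posrE.
apply: le_trans (_ : expR (2%:R * ln eps + (- 4%:R)) <= _).
  by rewrite ler_expR; rewrite hl in hk; lra.
rewrite expRD expRM_natl lnK ?posrE // expRN.
have e1 : 2 <= expR (1 : R) by have := expR_ge1Dx (1 : R); lra.
have e4 : 16 <= expR (4%:R : R).
  rewrite -[4%:R]mulr1 expRM_natl.
  have := pow_mono 4 (ler0n R 2) e1.
  by rewrite (_ : (2 : R) ^+ 4 = 16) //; rewrite !exprS expr0; lra.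
have e40 : 0 < expR (4%:R : R) by apply: expR_gt0.
rewrite ler_pM2l ?exprn_gt0 //.
by rewrite lef_pV2 ?posrE.
Qed.

Lemma sq_bound (R : realType) (x d : R) : 0 <= d -> x ^+ 2 <= d ^+ 2 -> - d <= x <= d.
Proof. move=> d0 h; apply/andP; split; nra. Qed.


Lemma ratio_final (R : realType) (a b p eps : R) : 0 < p -> 0 < eps -> eps < 1 ->
  - (p * (eps / 4)) <= a - p <= p * (eps / 4) ->
  - (p * (eps / 4)) <= b - p <= p * (eps / 4) -> ratio_close a b eps.
Proof.
move=> p0 e0 e1 /andP [ha1 ha2] /andP [hb1 hb2].
have pe : 0 < p * eps by apply: mulr_gt0.
have pe4 : p * (eps / 4) < p.
  by rewrite -[X in _ < X]mulr1 ltr_pM2l //; lra.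
have b0 : 0 < b by lra.
have pos : 0 < p * eps * (1/2 - eps/4) by apply: mulr_gt0 => //; lra.
rewrite /ratio_close gt_eqF //.
have key : a / b - 1 = (a - b) / b by field; rewrite gt_eqF.
have : eps * (p - p * (eps / 4)) <= eps * b by apply: ler_wpM2l; lra.
move=> heb; rewrite key ltr_norml; apply/andP; split.
  by rewrite ltr_pdivlMr //; lra.
by rewrite ltr_pdivrMr //; lra.
Qed.

Lemma final_arith (R : realType) (c L : R) (N t Cn : nat) :
  1 <= c -> 0 <= L -> (0 < N)%N -> (t%:R : R) <= 2 * L -> (Cn%:R : R) <= c + 1 ->
  ((t.+1 + 4).+2 * (16 * Cn * N * N.+1))%N%:R <= 500 * c * N%:R ^+ 2 * (1 + L).
Proof.
move=> c1 L0 Np t2 Cc.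
rewrite natrM.
have hk2 : ((t.+1 + 4).+2%:R : R) <= 7 * (1 + L).
  rewrite -!natr1 natrD -natr1; lra.
have hM : ((16 * Cn * N * N.+1)%N%:R : R) <= 64 * c * N%:R ^+ 2.
  rewrite !natrM.
  have N1 : 1 <= (N%:R : R) by rewrite ler1n.
  have hN : (N.+1%:R : R) <= 2 * N%:R by rewrite -natr1; lra.
  have hC : (Cn%:R : R) <= 2 * c by lra.
  have Cp : 0 <= (Cn%:R : R) by [].
  have h1 : (16%:R * Cn%:R * N%:R : R) <= 16 * (2 * c) * N%:R.
    rewrite ler_pM2r ?ltr0n //; lra.
  apply: le_trans (ler_pM _ _ h1 hN) _.
  - by apply: mulr_ge0 => //; apply: mulr_ge0.
  - by [].
  - rewrite expr2; lra.
have k0 : 0 <= ((t.+1 + 4).+2%:R : R) by [].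
have M0 : 0 <= ((16 * Cn * N * N.+1)%N%:R : R) by [].
apply: le_trans (ler_pM k0 M0 hk2 hM) _.
have : 0 <= c * N%:R ^+ 2 * (1 + L).
  by apply: mulr_ge0; [apply: mulr_ge0; [lra | exact: sqr_ge0] | lra].
lra.
Qed.

Theorem theorem1p14 (R : realType) (c : R) (hc : 1 <= c) :
  exists A : R, 0 < A /\
    forall (N : nat) (K : nat -> 'M[R]_N.+1),
      (forall i, (0 < i)%N -> QN (K i)) ->
      c_stable c K (unif R N) ->
      forall eps : R, 0 < eps < 1 ->
        exists n : nat, merged K eps n /\
          n%:R <= A * N%:R ^+ 2 * (1 + logp (1 / eps)).
Proof.
exists (500 * c); split; first lra.
move=> N K HQ Hc eps /andP [e0 e1].
case: (posnP N) => [N0 | Np].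
  subst N; exists 0%N; split.
    move=> x y z; rewrite (ord1 x) (ord1 y) (ord1 z) /ratio_close /= mxE eqxx /=.
    by rewrite oner_eq0 divr1 subrr normr0.
  by rewrite expr0n /= mulr0 mul0r.
set Cn := (Num.truncn c).+1.
have c0 : 0 <= c by lra.
have cC : c <= Cn%:R by apply: ltW; apply: truncnS_gt.
have Cc : (Cn%:R : R) <= c + 1.
  by rewrite /Cn -natr1 lerD2r truncn_le.
set L := ln (1 / eps).
have L0 : 0 <= L.
  apply: ln_ge0; rewrite ler_pdivlMr // mul1r; lra.
set t := Num.truncn (2 * L).
have t1 : 2 * L < t.+1%:R by apply: truncnS_gt.
have t2 : (t%:R : R) <= 2 * L by rewrite truncn_le; lra.
set k := (t.+1 + 4)%N.
have hk : 2 * ln (1 / eps) + 4 <= k%:R by rewrite /k natrD -/L; lra.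
set M := (16 * Cn * N * N.+1)%N.
have Cn1 : (1 <= Cn)%N by rewrite /Cn.
have Mp : (0 < M)%N by rewrite /M !muln_gt0 Cn1 Np.
exists (k.+2 * M)%N; split.
  move=> x y z.
  set n := (k.+2 * M)%N.
  set p := mu K n z.
  have pb := mu_bounds Hc n z; rewrite -/p in pb.
  have p0 : 0 < p.
    have [hb _] := andP pb.
    have : 0 < N.+1%:R * p by apply: (lt_le_trans _ hb); rewrite invr_gt0; lra.
    by rewrite pmulr_rgt0.
  have hq := @qpow R M k Mp.
  have hex := exp_small e0 hk.
  have bnd : forall w, - (p * (eps / 4)) <= Kprod K n w z - p <= p * (eps / 4).
    move=> w; apply: sq_bound; first by apply: mulr_ge0; [exact: ltW | apply: divr_ge0; [exact: ltW | by []]].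
    have := core k z w Np hc cC HQ Hc.
    rewrite -/M -/n -/p => h; apply: le_trans h _.
    rewrite exprMn; apply: ler_wpM2l; first exact: sqr_ge0.
    apply: le_trans hq _; apply: le_trans hex _.
    by rewrite expr_div_n; lra.
  exact: ratio_final p0 e0 e1 (bnd x) (bnd y).
have lp : logp (1 / eps) = L.
  by rewrite /logp -/L; apply/max_idPl.
by rewrite lp; apply: final_arith.
Qed.
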